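(* Consider a multi-sender single-uniprior index-coding instance with binary messages, information-flow graph $\mathcal{G}$ and message graph $\mathcal{U}$, in which each message is known to exactly one sender (i.e., the senders' message sets $\mathcal{M}_1,\dots,\mathcal{M}_S$ partition the message set). Then \[ \tilde{\ell}^*(\mathcal{G},\mathcal{U}) = V_{\mathrm{out}}(\mathcal{G}) - N_{\mathrm{conn}}(\mathcal{G},\mathcal{U}), \] where $N_{\mathrm{conn}}(\mathcal{G},\mathcal{U})$ is the number of message-connected leaf SCCs of $\mathcal{G}$.
   Context: Multi-sender single-uniprior index coding with binary messages: there are $n$ receivers and $n$ independent messages $x_1,\dots,x_n$, each a single bit uniformly distributed on $\{0,1\}$. Receiver $i$ knows $x_i$ a priori and requests a set of messages not containing $x_i$. The information-flow graph is the directed graph $\mathcal{G}=(\mathcal{V},\mathcal{A})$, $\mathcal{V}=\{1,\dots,n\}$, with an arc $(j\to i)$ iff receiver $i$ requests $x_j$. There are $S$ senders; sender $s$ knows a subset $\mathcal{M}_s$ of the messages, and every message is known to some sender. An index code consists of, for each sender $s$, an encoding function mapping the messages in $\mathcal{M}_s$ to $\ell_s$ bits, and for each receiver $i$ a decoding function that, from all senders' outputs together with $x_i$, returns every message requested by $i$, for all message values; its length is $\sum_s \ell_s$. $\tilde{\ell}^*(\mathcal{G},\mathcal{U})$ is the minimum length of an index code for the instance. The message graph $\mathcal{U}$ is the undirected graph on $\mathcal{V}$ with an edge $\{i,j\}$ iff some sender knows both $x_i$ and $x_j$. A leaf vertex of $\mathcal{G}$ has no outgoing arcs; $V_{\mathrm{out}}(\mathcal{G})$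 is the number of non-leaf vertices. A leaf SCC of $\mathcal{G}$ is a strongly connected component with at least two vertices and no arc from it to a vertex outside it. A leaf SCC with vertex set $\mathcal{V}_S$ is message-connected iff the subgraph of $\mathcal{U}$ induced by $\mathcal{V}_S$ is connected. *)

(* Defs.v *)
From mathcomp Require Import all_boot.
Set Implicit Arguments. Unset Strict Implicit. Unset Printing Implicit Defensive.

(* Vertices / receivers / messages are indexed by 'I_n.
   Information-flow graph G : rel 'I_n, with  G j i  meaning the arc (j -> i),
   i.e. receiver i requests message x_j. *)

Section Defs.
Variables (n S : nat).

Definition depends_only_on (A : {set 'I_n}) (T : Type)
  (f : {ffun 'I_n -> bool} -> T) : Prop :=
  forall x y : {ffun 'I_n -> bool}, (forall j, j \in A -> x j = y j) -> f x = f y.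

Definition index_code_of_length (G : rel 'I_n) (M : 'I_S -> {set 'I_n})
    (L : nat) : Prop :=
  exists (l : 'I_S -> nat)
         (E : forall s : 'I_S, {ffun 'I_n -> bool} -> (l s).-tuple bool)
         (D : 'I_n -> (forall s : 'I_S, (l s).-tuple bool) -> bool -> 'I_n -> bool),
    [/\ forall s, depends_only_on (M s) (E s),
        forall (x : {ffun 'I_n -> bool}) (i j : 'I_n),
          G j i -> D i (fun s => E s x) (x i) j = x j
      & \sum_(s < S) l s = L].

Definition min_index_code_length (G : rel 'I_n) (M : 'I_S -> {set 'I_n})
    (L : nat) : Prop :=
  index_code_of_length G M L /\
  forall L', index_code_of_length G M L' -> L <= L'.

Definition msg_edge (M : 'I_S -> {set 'I_n}) : rel 'I_n :=
  fun i j => (i != j) && [exists s, (i \in M s) && (j \in M s)].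

Definition V_out (G : rel 'I_n) : nat := #|[set i | [exists j, G i j]]|.

Definition is_scc (G : rel 'I_n) (C : {set 'I_n}) : bool :=
  [exists a, (a \in C) &&
     (C == [set b | connect G a b && connect G b a])].

Definition is_leaf_scc (G : rel 'I_n) (C : {set 'I_n}) : bool :=
  [&& is_scc G C, 1 < #|C| &
      [forall a, forall b, ((a \in C) && G a b) ==> (b \in C)]].

Definition msg_connected (M : 'I_S -> {set 'I_n}) (C : {set 'I_n}) : bool :=
  [forall a, forall b, ((a \in C) && (b \in C)) ==>
     connect [rel u v | [&& msg_edge M u v, u \in C & v \in C]] a b].

Definition N_conn (G : rel 'I_n) (M : 'I_S -> {set 'I_n}) : nat :=
  #|[set C : {set 'I_n} | is_leaf_scc G C && msg_connected M C]|.

End Defs.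

(* Main.v *)
Require Import Defs.
From mathcomp Require Import all_boot.
From Stdlib Require Import FunctionalExtensionality.
Set Implicit Arguments. Unset Strict Implicit. Unset Printing Implicit Defensive.

Section Proof.
Variables (n S : nat) (G : rel 'I_n) (M : 'I_S -> {set 'I_n}).
Hypothesis noloop : forall i, ~~ G i i.
Variable owner : 'I_n -> 'I_S.
Hypothesis own : forall j, j \in M (owner j).
Hypothesis uniq_own : forall j s, j \in M s -> s = owner j.

Definition Cc v := [set b | connect G v b && connect G b v].
Definition NC := [set C : {set 'I_n} | is_leaf_scc G C && msg_connected M C].
Definition Rt := [set v | (Cc v \in NC) && [forall u in Cc v, v <= u]].
Definition Vo := [set i | [exists j, G i j]].
Definition Aset := Vo :\: Rt.
Definition T s := [set v in Aset | owner v == s].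
Definition rt v := [arg min_(u < v in Cc v) val u].

Lemma Cc_self v : v \in Cc v.
Proof. by rewrite inE !connect0. Qed.

Lemma Cc_eq v a : v \in Cc a -> Cc v = Cc a.
Proof.
rewrite inE => /andP [av va]; apply/setP => b; rewrite !inE.
apply/andP/andP => [[vb bv]|[ab ba]]; split.
- exact: connect_trans av vb.
- exact: connect_trans bv va.
- exact: connect_trans va ab.
- exact: connect_trans ba av.
Qed.

Lemma rtP v : rt v \in Cc v /\ forall u, u \in Cc v -> rt v <= u.
Proof.
rewrite /rt; case: arg_minnP; first exact: Cc_self.
by move=> i Hi Hm; split.
Qed.

Lemma eqP_sym (x v : 'I_n) : x != v -> v != x.
Proof. by rewrite eq_sym. Qed.

Lemma connect_out v w : connect G v w -> v != w -> exists u, G v u.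
Proof.
case/connectP => p; case: p => [|u p] /=; first by move=> _ ->; rewrite eqxx.
by case/andP => vu _ _ _; exists u.
Qed.

Lemma leaf_out v : is_leaf_scc G (Cc v) -> v \in Vo.
Proof.
case/and3P => _ /card_gt1P [x [y [xin yin xy]]] _.
rewrite inE; apply/existsP.
have [xv|xv] := eqVneq x v.
- subst x; move: yin; rewrite inE => /andP [vy _].
  by have [u Hu] := connect_out vy xy; exists u.
- move: xin; rewrite inE => /andP [vx _].
  by have [u Hu] := connect_out vx (eqP_sym xv); exists u.
Qed.


Lemma closure (D : {set 'I_n}) :
  (forall v w, v \in D -> G v w -> w \in D) ->
  forall a b, connect G a b -> a \in D -> b \in D.
Proof.
move=> Hc a b /connectP [p]; elim: p a => [|c p IH] a /=; first by move=> _ ->.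
by case/andP => ac pc e aD; exact: (IH c pc e (Hc _ _ aD ac)).
Qed.

Lemma sink (D : {set 'I_n}) a0 : a0 \in D ->
  (forall v w, v \in D -> G v w -> w \in D) ->
  (forall v, v \in D -> exists w, G v w) ->
  exists a, [/\ a \in D, is_leaf_scc G (Cc a) & Cc a \subset D].
Proof.
move=> a0D Hc Hout.
pose reach v := [set b | connect G v b].
case: (arg_minnP (fun v => #|reach v|) a0D) => a aD amin.
have back : forall b, connect G a b -> connect G b a.
  move=> b ab; have bD := closure Hc ab aD.
  have sub : reach b \subset reach a.
    by apply/subsetP => c; rewrite !inE => bc; exact: connect_trans ab bc.
  have /eqP e : reach b == reach a by rewrite eqEcard sub amin.
  have : a \in reach b by rewrite e inE connect0.
  by rewrite inE.
have CcE : forall b, (b \in Cc a) = connect G a b.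
  move=> b; rewrite inE; apply/andP/idP => [[]//|ab].
  by split; last exact: back.
exists a; split => //.
- apply/and3P; split.
  + by apply/existsP; exists a; rewrite Cc_self eqxx.
  + have [w aw] := Hout a aD.
    apply/card_gt1P; exists a, w; split; [exact: Cc_self | by rewrite CcE connect1 | ].
    by apply/eqP => e; subst w; move: (noloop a); rewrite aw.
  + apply/forallP => u; apply/forallP => v; apply/implyP => /andP [uC uv].
    rewrite CcE in uC; rewrite CcE; exact: connect_trans uC (connect1 uv).
- by apply/subsetP => b; rewrite CcE => ab; apply: (closure Hc ab); exact: aD.
Qed.

Lemma Rt_rt v : Cc v \in NC -> (v \in Rt) = (rt v == v).
Proof.
move=> H; rewrite inE H /=; case: (rtP v) => rin rmin.
apply/forallP/eqP => [Hm | e].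
- apply/val_inj/eqP; rewrite eqn_leq rmin ?Cc_self //.
  exact: (implyP (Hm (rt v)) rin).
- by move=> u; apply/implyP => uin; rewrite -e; exact: rmin.
Qed.

Lemma Rt_in v : v \in Rt -> [forall u in Cc v, v <= u].
Proof. by rewrite inE => /andP []. Qed.

Lemma Rt_NC v : v \in Rt -> Cc v \in NC.
Proof. by rewrite inE => /andP []. Qed.

Lemma card_Rt : #|Rt| = N_conn G M.
Proof.
rewrite /N_conn -/NC -(card_in_imset (f:=Cc) (D:=Rt)).
  apply: eq_card => C; apply/imsetP/idP => [[v vR ->]|CN].
  - exact: Rt_NC.
  - have CN' := CN; rewrite inE in CN'; case/andP: CN' => /and3P [/existsP [a /andP [aC /eqP Ce]] _ _] _.
    have CCa : C = Cc a by rewrite Ce.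
    have [rin rmin] := rtP a.
    have e := Cc_eq rin.
    exists (rt a) => //.
    rewrite inE e -CCa CN /=; apply/forallP => u; apply/implyP => uin.
    by apply: rmin; rewrite -CCa.
  - by rewrite e.
move=> v w vR wR e.
have vw : v <= w by apply: (implyP (forallP (Rt_in vR) w)); rewrite e Cc_self.
have wv : w <= v by apply: (implyP (forallP (Rt_in wR) v)); rewrite -e Cc_self.
by apply/val_inj/eqP; rewrite eqn_leq vw wv.
Qed.

Lemma Rt_Vo : Rt \subset Vo.
Proof.
apply/subsetP => v /Rt_NC; rewrite inE => /andP [H _]; exact: leaf_out.
Qed.

Lemma card_A : #|Aset| = V_out G - N_conn G M.
Proof.
by rewrite /Aset cardsD (setIidPr Rt_Vo) card_Rt.
Qed.

Lemma sumT : \sum_(s < S) #|T s| = #|Aset|.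
Proof.
rewrite -sum1_card (partition_big owner predT) //=.
apply: eq_bigr => s _; rewrite -sum1_card; apply: eq_bigl => v.
by rewrite inE.
Qed.

Lemma msg_owner (C : {set 'I_n}) a b : msg_connected M C -> a \in C -> b \in C -> owner a = owner b.
Proof.
move=> /forallP /(_ a) /forallP /(_ b) /implyP H aC bC.
move: (H (introT andP (conj aC bC))) => /connectP [p].
elim: p a {H aC} => [|c p IH] a /=; first by move=> _ ->.
case/andP => /and3P [/andP [_ /existsP [s /andP [us cs]]] _ _] pc e.
rewrite -(uniq_own us) (uniq_own cs); exact: IH.
Qed.

Lemma msg_conn_sub (C : {set 'I_n}) s : C \subset M s -> msg_connected M C.
Proof.
move=> sub; apply/forallP => a; apply/forallP => b; apply/implyP => /andP [aC bC].
case: (eqVneq a b) => [->|ab]; first exact: connect0.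
apply: connect1; rewrite /= aC bC andbT /msg_edge ab andbT; apply/existsP; exists s.
by rewrite !(subsetP sub).
Qed.

Lemma rt_eq i j : Cc i = Cc j -> rt i = rt j.
Proof.
move=> e; have [ri mi] := rtP i; have [rj mj] := rtP j.
apply/val_inj/eqP; rewrite eqn_leq mi ?e // mj -?e //.
Qed.

Definition bit (x : {ffun 'I_n -> bool}) v :=
  if Cc v \in NC then x v (+) x (rt v) else x v.
Definition l0 s := #|T s|.
Definition E0 s (x : {ffun 'I_n -> bool}) : (l0 s).-tuple bool :=
  map_tuple (bit x) (enum_tuple (T s)).
Definition get (bits : forall s, (l0 s).-tuple bool) v :=
  nth false (bits (owner v)) (index v (enum (T (owner v)))).
Definition D0 (i : 'I_n) (bits : forall s, (l0 s).-tuple bool) (xi : bool) (j : 'I_n) :=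
  if Cc j \in NC then
    (if j == rt j then (if i == rt j then xi else get bits i (+) xi)
     else get bits j (+) (if i == rt j then xi else get bits i (+) xi))
  else get bits j.

Lemma get_ok x v : v \in T (owner v) -> get (fun s => E0 s x) v = bit x v.
Proof.
move=> vT; rewrite /get /E0 /=.
rewrite (nth_map v); last by rewrite index_mem mem_enum.
by rewrite nth_index // mem_enum.
Qed.

Lemma inT v : v \in Vo -> v \notin Rt -> v \in T (owner v).
Proof. by move=> vV vR; rewrite inE eqxx andbT inE vR vV. Qed.

Lemma E0_dep s : depends_only_on (M s) (E0 s).
Proof.
move=> x y H; apply/val_inj => /=; apply/eq_in_map => v; rewrite mem_enum => vT.
have os : owner v = s by move: vT; rewrite inE => /andP [_ /eqP].
rewrite /bit; case: ifP => CN.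
- have [rin _] := rtP v.
  have o2 : owner (rt v) = owner v.
    by move: CN; rewrite inE => /andP [_ mc]; apply: (msg_owner mc rin (Cc_self v)).
  have vM : v \in M s by rewrite -os; exact: own.
  have rM : rt v \in M s by rewrite -os -o2; exact: own.
  by rewrite !H.
- by rewrite H // -os; exact: own.
Qed.

Lemma D0_ok x i j : G j i -> D0 i (fun s => E0 s x) (x i) j = x j.
Proof.
move=> ji.
have jV : j \in Vo by rewrite inE; apply/existsP; exists i.
rewrite /D0; case: ifP => CN; last first.
  have jR : j \notin Rt by apply/negP => /Rt_NC; rewrite CN.
  by rewrite get_ok ?inT // /bit CN.
have iC : i \in Cc j.
  move: CN; rewrite inE => /andP [/and3P [_ _ /forallP /(_ j) /forallP /(_ i) /implyP]] H _.
  by apply: H; rewrite Cc_self.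
have e := Cc_eq iC.
have ri := rt_eq e.
have CNi : Cc i \in NC by rewrite e.
have iV : i \in Vo by apply: leaf_out; move: CNi; rewrite inE => /andP [].
have xr : (if i == rt j then x i else get (fun s => E0 s x) i (+) x i) = x (rt j).
  case: eqP => [-> //|ni].
  have iR : i \notin Rt by rewrite (Rt_rt CNi) ri; apply/eqP => h; apply: ni; rewrite h.
  rewrite get_ok ?inT // /bit CNi ri.
  by case: (x i); case: (x (rt j)).
rewrite xr; case: eqP => [e2|nj]; first by rewrite -e2.
have jR : j \notin Rt by rewrite (Rt_rt CN); apply/eqP => h; apply: nj; rewrite h.
rewrite get_ok ?inT // /bit CN.
by case: (x j); case: (x (rt j)).
Qed.

Lemma sum_l0 : \sum_(s < S) l0 s = V_out G - N_conn G M.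
Proof. by rewrite -card_A -sumT. Qed.

Lemma lower (l : 'I_S -> nat)
  (E : forall s : 'I_S, {ffun 'I_n -> bool} -> (l s).-tuple bool)
  (D : 'I_n -> (forall s : 'I_S, (l s).-tuple bool) -> bool -> 'I_n -> bool) :
  (forall s, depends_only_on (M s) (E s)) ->
  (forall (x : {ffun 'I_n -> bool}) (i j : 'I_n),
          G j i -> D i (fun s => E s x) (x i) j = x j) ->
  forall s, #|T s| <= l s.
Proof.
move=> Hdep Hdec s.
pose f (P : {set 'I_n}) := E s [ffun v => v \in P].
have inj : {in powerset (T s) &, injective f}.
  move=> P Q; rewrite !powersetE => PT QT fe.
  set x := [ffun v => v \in P]; set y := [ffun v => v \in Q].
  have Et : forall t, E t x = E t y.
    move=> t; case: (eqVneq t s) => [->//|ts].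
    apply: Hdep => u uM.
    have uT : u \notin T s.
      apply/negP; rewrite inE => /andP [_ /eqP ou].
      by move: ts; rewrite (uniq_own uM) ou eqxx.
    rewrite !ffunE.
    rewrite (negbTE (contra (subsetP PT u) uT)) (negbTE (contra (subsetP QT u) uT)) //.
  have EF : (fun t => E t x) = (fun t => E t y) := functional_extensionality_dep _ _ Et.
  have closed : forall v w, x v != y v -> G v w -> x w != y w.
    move=> v w nv vw; apply/negP => /eqP ew; move/negP: nv; apply; apply/eqP.
    by rewrite -(Hdec x w v vw) -(Hdec y w v vw) EF ew.
  have sameall : forall v, x v = y v.
    move=> v0; apply/eqP; apply/negPn/negP => nv0.
    pose Dd := [set v | x v != y v].
    have DT : forall v, v \in Dd -> v \in T s.
      move=> v; rewrite inE !ffunE; case: (boolP (v \in P)) => vP.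
        by move=> _; exact: (subsetP PT v vP).
      by case vQ: (v \in Q) => // _; exact: (subsetP QT v).
    have cD : forall v w, v \in Dd -> G v w -> w \in Dd.
      by move=> v w; rewrite !inE; exact: closed.
    have oD : forall v, v \in Dd -> exists w, G v w.
      move=> v vD; move: (DT v vD); rewrite !inE => /andP [/andP [_ vV] _].
      by move: vV => /existsP.
    have v0D : v0 \in Dd by rewrite inE.
    have [a [aD leaf sub]] := sink v0D cD oD.
    have [rin rmin] := rtP a.
    have rT : rt a \in T s by apply: DT; exact: (subsetP sub).
    have CT : Cc a \subset M s.
      apply/subsetP => u /(subsetP sub) /DT; rewrite inE => /andP [_ /eqP <-].
      exact: own.
    have : rt a \in Rt.
      rewrite inE (Cc_eq rin) inE leaf (msg_conn_sub CT) /=.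
      by apply/forallP => u; apply/implyP; exact: rmin.
    move=> rR; move: rT; rewrite inE => /andP [/setDP [_ nR] _].
    by rewrite rR in nR.
  by apply/setP => v; move: (sameall v); rewrite !ffunE.
have := max_card (mem (f @: powerset (T s))).
rewrite card_in_imset // card_powerset card_tuple card_bool => h.
by rewrite -(leq_exp2l _ _ (ltnSn 1)).
Qed.

End Proof.

Theorem corollary3 (n S : nat) (G : rel 'I_n) (M : 'I_S -> {set 'I_n})
  (no_self_request : forall i : 'I_n, ~~ G i i)
  (partition : forall j : 'I_n,
     exists s : 'I_S, j \in M s /\ forall s' : 'I_S, j \in M s' -> s' = s) :
  min_index_code_length G M (V_out G - N_conn G M).
Proof.
have [owner Ho] := fin_all_exists partition.
have own : forall j, j \in M (owner j) by move=> j; case: (Ho j).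
have uo : forall j s, j \in M s -> s = owner j by move=> j s; case: (Ho j) => _; exact.
split.
- exists (l0 G M owner), (E0 G M owner), (@D0 _ _ G M owner); split.
  + by move=> s; apply: E0_dep.
  + by move=> x i j; apply: D0_ok.
  + by apply: sum_l0.
- move=> L' [l [E [D [Hdep Hdec <-]]]].
  rewrite -(card_A G M) -(sumT G M owner).
  apply: leq_sum => s _; exact: (lower no_self_request own uo Hdep Hdec).
Qed.
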